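(* Let $G$ be a finite group, $k\ge 3$ an integer, and $A_1,\ldots,A_k\subseteq G$ nonempty subsets such that the multiplication map $A_1\times\cdots\times A_k\to G$, $(a_1,\ldots,a_k)\mapsto a_1\cdots a_k$, is a bijection. Fix $i$ with $1<i<k$, and let $K$, $H$, $K'$ be the subgroups of $G$ generated by the set $A_1\cdots A_{i-1}=\{a_1\cdots a_{i-1}: a_j\in A_j\}$, by $A_i$, and by the set $A_{i+1}\cdots A_k=\{a_{i+1}\cdots a_k: a_j\in A_j\}$, respectively. Let $M$ be the subgroup of $G$ generated by all conjugates $xHx^{-1}$ with $x\in K$, and $M'$ the subgroup generated by all conjugates $xHx^{-1}$ with $x\in K'$. Then $\mathrm{card}(A_i)$ divides both $|M|$ and $|M'|$. *)

(* Defs.v *)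
From mathcomp Require Import all_boot all_fingroup.
Set Implicit Arguments. Unset Strict Implicit. Unset Printing Implicit Defensive.
Local Open Scope group_scope.

Definition ordprod (gT : finGroupType) (k : nat) (a : 'I_k -> gT) : gT :=
  \prod_(j < k) a j.

Definition mul_bijective (gT : finGroupType) (k : nat) (A : 'I_k -> {set gT}) : Prop :=
  forall g : gT, exists! a : {ffun 'I_k -> gT},
    (forall j, a j \in A j) /\ ordprod a = g.

Definition rangeprod (gT : finGroupType) (k : nat) (A : 'I_k -> {set gT})
  (lo hi : nat) : {set gT} :=
  \prod_(j < k | (lo <= j) && (j < hi)) A j.

(* Main.v *)
Require Import Defs.
From mathcomp Require Import all_boot all_fingroup.
From mathcomp Require Import zify.
Set Implicit Arguments. Unset Strict Implicit.
Local Open Scope group_scope.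
Lemma split3 (R : Type) (idx : R) (op : Monoid.law idx) k (F : 'I_k -> R) (i : 'I_k) :
 \big[op/idx]_(j<k) F j = op (op (\big[op/idx]_(j<k | j < i) F j) (F i))
                              (\big[op/idx]_(j<k | i < j) F j).
Proof.
pose G n := F (insubd i n).
have EG (P : pred nat) : \big[op/idx]_(j<k | P (val j)) F j = \big[op/idx]_(0 <= j < k | P j) G j.
  by rewrite big_mkord; apply: eq_bigr => j _; rewrite /G valKd.
have Ei : G i = F i by rewrite /G valKd.
have ik : i <= k by apply: ltnW.
rewrite (EG xpredT) (EG (fun j => j < i)) (EG (fun j => i < j)).
have L1 : \big[op/idx]_(0 <= j < k) G j = op (\big[op/idx]_(0 <= j < i) G j)
     (op (G i) (\big[op/idx]_(i.+1 <= j < k) G j)).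
  by rewrite (@big_cat_nat _ _ op i 0 k _ G (leq0n i) ik) (big_ltn (ltn_ord i)).
have L2 : \big[op/idx]_(0 <= j < k | j < i) G j = \big[op/idx]_(0 <= j < i) G j.
  rewrite (@big_cat_nat _ _ op i 0 k _ G (leq0n i) ik) /=.
  rewrite [X in op _ X]big_nat_cond [X in op _ X]big_pred0 ?Monoid.mulm1; last first.
    by move=> j; apply/negP => /andP [/andP [? ?] ?]; lia.
  by rewrite [RHS]big_nat_cond [LHS]big_nat_cond; apply: eq_bigl => j; case/boolP: (_ <= _ < _) => //= /andP [] ->.
have L3 : \big[op/idx]_(0 <= j < k | i < j) G j = \big[op/idx]_(i.+1 <= j < k) G j.
  rewrite (@big_cat_nat _ _ op i.+1 0 k _ G (leq0n _) (ltn_ord i)) /=.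
  rewrite [X in op X _]big_nat_cond [X in op X _]big_pred0 ?Monoid.mul1m; last first.
    by move=> j; apply/negP => /andP [/andP [? ?] ?]; lia.
  by rewrite [RHS]big_nat_cond [LHS]big_nat_cond; apply: eq_bigl => j; case/boolP: (_ <= _ < _) => //= /andP [] ->.
by rewrite L1 L2 L3 Ei Monoid.mulmA.
Qed.

Definition upd (gT : finGroupType) k (a : {ffun 'I_k -> gT}) (i : 'I_k) (x : gT)
  : {ffun 'I_k -> gT} := [ffun j => if j == i then x else a j].

Lemma count_div (gT : finGroupType) k (A : 'I_k -> {set gT}) (i : 'I_k) (X : {set gT}) :
  mul_bijective A ->
  (forall (a : {ffun 'I_k -> gT}) x, (forall j, a j \in A j) -> x \in A i ->
      (ordprod (upd a i x) \in X) = (ordprod a \in X)) ->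
  (#|A i| %| #|X|)%N.
Proof.
move=> bij inv.
pose S := [set a : {ffun 'I_k -> gT} | [forall j, a j \in A j] && (ordprod a \in X)].
have cS : #|S| = #|X|.
  have inj : {in S &, injective (fun a : {ffun 'I_k -> gT} => ordprod a)}.
    move=> a b; rewrite !inE => /andP [/forallP Ha _] /andP [/forallP Hb _] Hab.
    case: (bij (ordprod a)) => u [_ uq].
    by rewrite -(uq a (conj Ha erefl)) -(uq b (conj Hb (esym Hab))).
  rewrite -(card_in_imset inj); apply: eq_card => g; apply/imsetP/idP.
    by case=> a; rewrite inE => /andP [_ ?] ->.
  move=> Hg; case: (bij g) => a [[Ha Ea] _]; exists a => //.
  by rewrite inE Ea Hg andbT; apply/forallP.
pose Sx x := [set a in S | a i == x].
have part : #|S| = (\sum_(x in A i) #|Sx x|)%N.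
  rewrite -sum1_card (partition_big (fun a : {ffun 'I_k -> gT} => a i) (mem (A i))).
    by apply: eq_bigr => x _; rewrite -sum1_card; apply: eq_bigl => a; rewrite [in RHS]inE.
  by move=> a; rewrite inE => /andP [/forallP Ha _]; apply: Ha.
have eqx : forall x y, x \in A i -> y \in A i -> #|Sx x| <= #|Sx y|.
  move=> x y Hx Hy.
  have inj : {in Sx x &, injective (fun a => upd a i y)}.
    move=> a b; rewrite !inE => /andP [_ /eqP ax] /andP [_ /eqP bx] Eab.
    apply/ffunP => j; case: (eqVneq j i) => [->|ne]; first by rewrite ax bx.
    by move/ffunP: Eab => /(_ j); rewrite !ffunE (negbTE ne).
  rewrite -(card_in_imset inj); apply: subset_leq_card; apply/subsetP => _ /imsetP [a Ha ->].
  move: Ha; rewrite !inE => /andP [/andP [/forallP Ha HX] _].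
  rewrite inv // HX ffunE eqxx; apply/andP; split => //; apply/andP; split => //; apply/forallP => j; rewrite ffunE.
  by case: (eqVneq j i) => [->|]; [exact: Hy| rewrite Ha].
rewrite -cS part.
have [->|[x0 Hx0]] := set_0Vmem (A i); first by rewrite cards0 dvd0n big_pred0 // => x; rewrite inE.
rewrite (eq_bigr (fun=> #|Sx x0|)); last by move=> x Hx; apply/eqP; rewrite eqn_leq !eqx.
by rewrite sum_nat_const dvdn_mulr.
Qed.

Theorem lemma2p3 (gT : finGroupType) (k : nat) (A : 'I_k -> {set gT}) (i : 'I_k) :
  3 <= k ->
  (forall j, A j != set0) ->
  mul_bijective A ->
  0 < i -> i < k.-1 ->
  let K := <<rangeprod A 0 i>> in
  let H := <<A i>> in
  let K' := <<rangeprod A i.+1 k>> in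
  let M := <<\bigcup_(x in K) (H :^ x^-1)>> in
  let M' := <<\bigcup_(x in K') (H :^ x^-1)>> in
  (#|A i| %| #|M|)%N /\ (#|A i| %| #|M'|)%N.
Proof.
move=> _ _ bij _ _ K H K' M M'.
pose b (a : {ffun 'I_k -> gT}) := \prod_(j < k | j < i) a j.
pose c (a : {ffun 'I_k -> gT}) := \prod_(j < k | i < j) a j.
have Eo : forall a : {ffun 'I_k -> gT}, ordprod a = b a * a i * c a.
  by move=> a; rewrite /ordprod (split3 _ _ i).
have Eu : forall (a : {ffun 'I_k -> gT}) x, ordprod (upd a i x) = b a * x * c a.
  move=> a x; rewrite Eo ffunE eqxx; congr (_ * _ * _).
    by apply: eq_bigr => j ji; rewrite ffunE ifF //; apply/negbTE; rewrite neq_ltn ji.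
  by apply: eq_bigr => j ji; rewrite ffunE ifF //; apply/negbTE; rewrite neq_ltn ji orbT.
have bK : forall a : {ffun 'I_k -> gT}, (forall j, a j \in A j) -> b a \in K.
  move=> a Ha; apply: mem_gen; rewrite /rangeprod.
  rewrite (eq_bigl (fun j : 'I_k => j < i)); last by move=> j; rewrite leq0n.
  apply: (big_ind2 (fun x (Y : {set gT}) => x \in Y)); [exact: group1 | by move=> x1 x2 y1 y2; apply: mem_mulg | by move=> j _; apply: Ha].
have cK : forall a : {ffun 'I_k -> gT}, (forall j, a j \in A j) -> c a \in K'.
  move=> a Ha; apply: mem_gen; rewrite /rangeprod.
  rewrite (eq_bigl (fun j : 'I_k => i < j)); last by move=> j; rewrite ltn_ord andbT.
  apply: (big_ind2 (fun x (Y : {set gT}) => x \in Y)); [exact: group1 | by move=> x1 x2 y1 y2; apply: mem_mulg | by move=> j _; apply: Ha].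
have yH : forall y, y \in A i -> y \in H by move=> y Hy; apply: mem_gen.
split.
  apply: count_div => // a x Ha Hx; rewrite Eu Eo.
  have key : forall y, y \in A i -> (b a * y * c a \in M) = (b a * c a \in M).
    move=> y Hy; have -> : b a * y * c a = (y ^ (b a)^-1) * (b a * c a).
      by rewrite /conjg invgK !mulgA mulgKV.
    rewrite groupMl //; apply: mem_gen; apply/bigcupP; exists (b a); first exact: bK.
    by rewrite memJ_conjg yH.
  by rewrite !key.
apply: count_div => // a x Ha Hx; rewrite Eu Eo.
have key : forall y, y \in A i -> (b a * y * c a \in M') = (b a * c a \in M').
  move=> y Hy; have -> : b a * y * c a = (b a * c a) * (y ^ c a).
    by rewrite /conjg !mulgA mulgK.
  rewrite groupMr //; apply: mem_gen; apply/bigcupP; exists (c a)^-1.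
    by rewrite groupV; apply: cK.
  by rewrite invgK memJ_conjg yH.
by rewrite !key.
Qed.
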